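(* Let $\mathbb{Z}_{(p_n)}$ be an odometer with scale $(p_n)$. Then $\operatorname{Aut}^{(\infty)}(\mathbb{Z}_{(p_n)},+\mathbf{1})$ is isomorphic to the direct limit of a sequence $$\mathbb{Z}_{(p_n)}\xrightarrow{j_0}\mathbb{Z}_{(p_{n+1}/p_1)}^{p_1}\rtimes\operatorname{Sym}(p_1)\xrightarrow{j_1}\mathbb{Z}_{(p_{n+2}/p_2)}^{p_2}\rtimes\operatorname{Sym}(p_2)\xrightarrow{j_2}\mathbb{Z}_{(p_{n+3}/p_3)}^{p_3}\rtimes\operatorname{Sym}(p_3)\xrightarrow{j_3}\cdots$$ where the maps $j_k$ are injective group homomorphisms.
   Context: A scale is a sequence $(p_n)$ of positive integers with $p_n\mid p_{n+1}$, not eventually constant. The odometer is $\mathbb{Z}_{(p_n)}=\{(x_n)\in\prod_n\mathbb{Z}/p_n\mathbb{Z}: x_{n+1}\equiv x_n\bmod p_n\}$ with translation by $\mathbf{1}=(1,1,\dots)$; $\mathbb{Z}_{(p_{n+k}/p_k)}$ denotes the odometer with scale $(p_{n+k}/p_k)_{n\ge1}$. $\operatorname{Aut}(X,T)$ is the group of homeomorphisms commuting with $T$ and $\operatorname{Aut}^{(\infty)}(X,T)=\bigcup_{n\ge1}\operatorname{Aut}(X,T^n)\subseteq\operatorname{Homeo}(X)$. In $H^{p}\rtimes\operatorname{Sym}(p)$ the symmetric group acts by permuting coordinates. *)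

(* Defs.v *)
From mathcomp Require Import all_boot all_order all_fingroup.
From Stdlib Require Import ProofIrrelevance FunctionalExtensionality.

Set Implicit Arguments.
Unset Strict Implicit.
Unset Printing Implicit Defensive.

(* Scales.  The paper's scale (p_n)_{n>=1} is represented 0-indexed:  *)
(*   p : nat -> nat  with  p n = p_{n+1}.                             *)
Definition is_scale (p : nat -> nat) : Prop :=
  [/\ (forall n, 0 < p n),
      (forall n, p n %| p n.+1) &
      ~ (exists N, forall n, N <= n -> p n = p N)].

(* Odometer: Z_(s) = {(x_n) in prod_n Z/s_n : x_{n+1} = x_n mod s_n}, *)
(* elements of Z/s_n represented by residues in [0, s_n).             *)
Definition odo_pred (s : nat -> nat) (x : nat -> nat) : Prop :=
  forall n, x n < s n /\ x n.+1 = x n %[mod s n].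

Definition odo (s : nat -> nat) := {x : nat -> nat | odo_pred s x}.

Lemma odo_pos s (x : odo s) n : 0 < s n.
Proof. by case: x => x hx; case: (hx n) => h _; apply: leq_ltn_trans h. Qed.

Lemma odo_add_proof s (hd : forall n, s n %| s n.+1) (x y : odo s) :
  odo_pred s (fun n => (proj1_sig x n + proj1_sig y n) %% s n).
Proof.
move=> n; split; first by rewrite ltn_pmod // (odo_pos x n).
case: x y => x hx [y hy] /=.
case: (hx n) => _ ex; case: (hy n) => _ ey.
by rewrite modn_mod modn_dvdm // -modnDm ex ey modnDm.
Qed.

Definition odo_add s (hd : forall n, s n %| s n.+1) (x y : odo s) : odo s :=
  exist _ _ (odo_add_proof hd x y).

Lemma odo_succ_proof s (hd : forall n, s n %| s n.+1) (x : odo s) :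
  odo_pred s (fun n => (proj1_sig x n + 1) %% s n).
Proof.
move=> n; split; first by rewrite ltn_pmod // (odo_pos x n).
case: x => x hx /=; case: (hx n) => _ ex.
by rewrite modn_mod modn_dvdm // -modnDml ex modnDml.
Qed.

Definition odo_succ s (hd : forall n, s n %| s n.+1) (x : odo s) : odo s :=
  exist _ _ (odo_succ_proof hd x).

(* Continuity for the (subspace of the) product topology of the      *)
(* discrete spaces Z/s_n : basic neighbourhoods of x are the          *)
(* cylinders {y | y_j = x_j for all j <= m}.                           *)
Definition odo_cont s (f : odo s -> odo s) : Prop :=
  forall (x : odo s) (n : nat), exists m : nat, forall y : odo s,
    (forall j, j <= m -> proj1_sig y j = proj1_sig x j) ->
    proj1_sig (f y) n = proj1_sig (f x) n.

(* Groups, given by their carrier and multiplication (all instances   *)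
(* below are the standard groups), homomorphisms, direct limits.      *)
Record grp := Grp { gcar :> Type; gmul : gcar -> gcar -> gcar }.

Definition ghom (G H : grp) (f : G -> H) : Prop :=
  forall x y, f (gmul x y) = gmul (f x) (f y).

Fixpoint trans (G : nat -> grp) (j : forall k, G k -> G k.+1) (k n : nat)
  : G k -> G (n + k) :=
  match n return G k -> G (n + k) with
  | 0 => fun x => x
  | n'.+1 => fun x => j (n' + k) (@trans G j k n' x)
  end.
Arguments trans {G} j k n x.

(* (L, phi) is a direct limit (colimit) of G_0 -j_0-> G_1 -j_1-> ...   *)
(* i.e. L is the disjoint union of the G_k modulo "eventually equal",  *)
(* with the induced group law: phi is a compatible family of          *)
(* homomorphisms, jointly surjective, identifying exactly the         *)
(* elements which become equal in some later G_n.                     *)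
Definition is_direct_limit (G : nat -> grp) (j : forall k, G k -> G k.+1)
    (L : grp) (phi : forall k, G k -> L) : Prop :=
  [/\ (forall k, ghom (phi k)),
      (forall k x, phi k.+1 (j k x) = phi k x),
      (forall z : L, exists k (x : G k), phi k x = z) &
      (forall k (x y : G k), phi k x = phi k y ->
         exists n, trans j k n x = trans j k n y)].

Definition odo_grp s (hd : forall n, s n %| s n.+1) : grp :=
  Grp (odo_add hd).

(* H^p semidirect Sym(p), Sym(p) acting by permuting coordinates:     *)
(*   (v, sigma) (w, tau) = (v + sigma.w, sigma o tau),                *)
(*   (sigma.w)_i = w_{sigma^{-1} i}.                                  *)
(* Note mathcomp's permutation product is (s * t) x = t (s x), so     *)
(* sigma o tau is (tau * sigma)%g.                                    *)
Definition sdp_mul (H : grp) (p : nat) (a b : ('I_p -> H) * 'S_p)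
  : ('I_p -> H) * 'S_p :=
  (fun i => gmul (a.1 i) (b.1 ((a.2^-1)%g i)), (b.2 * a.2)%g).

Definition sdp (H : grp) (p : nat) : grp := Grp (@sdp_mul H p).

Lemma scale_dvd_le p (hp : is_scale p) i j : i <= j -> p i %| p j.
Proof.
case: hp => _ hd _; elim: j => [|j IH]; first by rewrite leqn0 => /eqP ->.
rewrite leq_eqVlt => /orP [/eqP -> //|]; rewrite ltnS => /IH h.
exact: dvdn_trans h (hd j).
Qed.

(* shifted scale (p_{n+k}/p_k)_{n>=1} for k = k'+1, 0-indexed *)
Definition shift_scale (p : nat -> nat) (k' : nat) : nat -> nat :=
  fun n => p (n + k').+1 %/ p k'.

Lemma shift_scale_dvd p (hp : is_scale p) k' n :
  shift_scale p k' n %| shift_scale p k' n.+1.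
Proof.
have [hpos hd _] := hp.
rewrite /shift_scale.
have h1 : p k' %| p (n + k').+1 by apply: scale_dvd_le => //; rewrite -addSn leq_addl.
have h2 : p k' %| p (n.+1 + k').+1 by apply: scale_dvd_le => //; rewrite -addSn leq_addl.
rewrite -(dvdn_pmul2r (hpos k')) !divnK //.

Qed.

Definition scale_dvd p (hp : is_scale p) : forall n, p n %| p n.+1 :=
  let: And3 _ hd _ := hp in hd.

(* G_0 = Z_(p_n);  G_k = Z_(p_{n+k}/p_k)^{p_k} x| Sym(p_k)  (k >= 1) *)
Definition Gseq (p : nat -> nat) (hp : is_scale p) (k : nat) : grp :=
  match k with
  | 0 => odo_grp (scale_dvd hp)
  | k'.+1 => sdp (odo_grp (shift_scale_dvd hp k')) (p k')
  end.

(* A homeomorphism is stored together with its (unique) inverse.      *)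
Definition is_homeo s (fg : (odo s -> odo s) * (odo s -> odo s)) : Prop :=
  [/\ cancel fg.1 fg.2, cancel fg.2 fg.1, odo_cont fg.1 & odo_cont fg.2].

Definition homeo s := {fg | @is_homeo s fg}.

Definition hfun s (h : homeo s) : odo s -> odo s := (proj1_sig h).1.

Definition in_Aut_inf s (hd : forall n, s n %| s n.+1) (h : homeo s) : Prop :=
  exists n, 0 < n /\
    forall x, hfun h (iter n (odo_succ hd) x) = iter n (odo_succ hd) (hfun h x).

Lemma odo_cont_comp s (f g : odo s -> odo s) :
  odo_cont f -> odo_cont g -> odo_cont (f \o g).
Proof.
move=> cf cg x n /=; have [m hm] := cf (g x) n.
have [M hM] : exists M, forall y : odo s,
    (forall j, j <= M -> proj1_sig y j = proj1_sig x j) ->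
    forall i, i <= m -> proj1_sig (g y) i = proj1_sig (g x) i.
  elim: m {hm} => [|m [M hM]].
    have [M hM] := cg x 0; exists M => y hy i; rewrite leqn0 => /eqP ->; exact: hM.
  have [M' hM'] := cg x m.+1; exists (maxn M M') => y hy i.
  rewrite leq_eqVlt => /orP [/eqP ->|]; last first.
    by rewrite ltnS; apply: hM => jj hj; apply: hy; rewrite leq_max hj.
  by apply: hM' => jj hj; apply: hy; rewrite leq_max hj orbT.
by exists M => y hy; apply: hm; apply: hM.
Qed.

Lemma homeo_mul_proof s (a b : homeo s) :
  is_homeo ((hfun a \o hfun b), ((proj1_sig b).2 \o (proj1_sig a).2)).
Proof.
case: a b => [[f f'] [af1 af2 af3 af4]] [[g g'] [bf1 bf2 bf3 bf4]].
rewrite /hfun /=; split => /=.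
- exact: can_comp.
- exact: can_comp.
- exact: odo_cont_comp.
- exact: odo_cont_comp.
Qed.

Definition homeo_mul s (a b : homeo s) : homeo s :=
  exist _ _ (homeo_mul_proof a b).

Lemma iter_comm (T : Type) (f g : T -> T) :
  (forall x, f (g x) = g (f x)) -> forall n x, f (iter n g x) = iter n g (f x).
Proof. by move=> h; elim=> [//|n IH] x /=; rewrite h IH. Qed.

Lemma aut_inf_mul_proof s (hd : forall n, s n %| s n.+1) (a b : homeo s) :
  in_Aut_inf hd a -> in_Aut_inf hd b -> in_Aut_inf hd (homeo_mul a b).
Proof.
move=> [m [m0 hm]] [n [n0 hn]]; exists (m * n); split; first by rewrite muln_gt0 m0.
have E1 : forall x, iter (m * n) (odo_succ hd) x = iter n (iter m (odo_succ hd)) x.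
  by move=> x; rewrite mulnC iterM.
have E2 : forall x, iter (m * n) (odo_succ hd) x = iter m (iter n (odo_succ hd)) x.
  by move=> x; rewrite iterM.
have ha : forall x, hfun a (iter (m * n) (odo_succ hd) x)
                    = iter (m * n) (odo_succ hd) (hfun a x).
  by move=> x; rewrite !E1 (iter_comm hm).
have hb : forall x, hfun b (iter (m * n) (odo_succ hd) x)
                    = iter (m * n) (odo_succ hd) (hfun b x).
  by move=> x; rewrite !E2 (iter_comm hn).
by move=> x; rewrite /hfun /= -/(hfun b) -/(hfun a) hb ha.
Qed.

Definition aut_inf s (hd : forall n, s n %| s n.+1) := {h : homeo s | in_Aut_inf hd h}.

Definition aut_inf_mul s (hd : forall n, s n %| s n.+1) (a b : aut_inf hd)
  : aut_inf hd :=
  exist _ _ (aut_inf_mul_proof (proj2_sig a) (proj2_sig b)).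

Definition Aut_inf_grp s (hd : forall n, s n %| s n.+1) : grp :=
  Grp (@aut_inf_mul s hd).

(* Main.v *)
Require Import Defs.
From mathcomp Require Import all_boot all_order all_fingroup.
From Stdlib Require Import ProofIrrelevance FunctionalExtensionality Classical.

Set Implicit Arguments. Unset Strict Implicit. Unset Printing Implicit Defensive.

Definition xv s (x : odo s) n := proj1_sig x n.

Lemma odo_eq s (x y : odo s) : (forall n, xv x n = xv y n) -> x = y.
Proof.
case: x y => [x hx] [y hy] /= H.
have E : x = y by apply: functional_extensionality.
subst y; congr exist; exact: proof_irrelevance.
Qed.

Lemma xv_lt s (x : odo s) n : xv x n < s n.
Proof. by case: x => x hx; case: (hx n). Qed.
Lemma xv_mod s (x : odo s) n : xv x n %% s n = xv x n.
Proof. by rewrite modn_small // xv_lt. Qed.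
Lemma xv_S s (x : odo s) n : xv x n.+1 %% s n = xv x n.
Proof. case: x => x hx; case: (hx n) => h e /=. by rewrite e modn_small. Qed.

Lemma dvd_le s (hd : forall n, s n %| s n.+1) m M : m <= M -> s m %| s M.
Proof.
elim: M => [|M IH]; first by rewrite leqn0 => /eqP ->.
rewrite leq_eqVlt => /orP [/eqP -> //|]; rewrite ltnS => /IH h.
exact: dvdn_trans h (hd M).
Qed.

Lemma xv_le s (hd : forall n, s n %| s n.+1) (x : odo s) m M :
  m <= M -> xv x M %% s m = xv x m.
Proof.
elim: M => [|M IH]; first by rewrite leqn0 => /eqP ->; rewrite xv_mod.
rewrite leq_eqVlt => /orP [/eqP -> |]; first exact: xv_mod.
rewrite ltnS => h; rewrite -(IH h) -(xv_S x M) modn_dvdm //; exact: dvd_le.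
Qed.

Lemma mk_odo_proof s (hd : forall n, s n %| s n.+1) (hpos : forall n, 0 < s n)
  (f : nat -> nat) (hf : forall n, f n.+1 = f n %[mod s n]) :
  odo_pred s (fun n => f n %% s n).
Proof.
move=> n; split; first by rewrite ltn_mod.
by rewrite modn_dvdm // hf modn_mod.
Qed.

Definition mk_odo s hd hpos f hf : odo s := exist _ _ (@mk_odo_proof s hd hpos f hf).

Lemma xv_mk s hd hpos f hf n : xv (@mk_odo s hd hpos f hf) n = f n %% s n.
Proof. by []. Qed.

Lemma xv_add s hd (x y : odo s) n : xv (odo_add hd x y) n = (xv x n + xv y n) %% s n.
Proof. by []. Qed.

Lemma dvd_mod0 s (hd : forall n, s n %| s n.+1) n : s n.+1 %% s n = 0.
Proof. by case/dvdnP: (hd n) => k ->; rewrite modnMl. Qed.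

Lemma cst_proof s (j : nat) : forall n, (fun _ : nat => j) n.+1 = (fun _ => j) n %[mod s n].
Proof. by []. Qed.

Definition cst s hd hpos j : odo s := @mk_odo s hd hpos _ (@cst_proof s j).

Lemma neg_proof s (hd : forall n, s n %| s n.+1) (x : odo s) :
  forall n, s n.+1 - xv x n.+1 = s n - xv x n %[mod s n].
Proof.
move=> n; apply/eqP; rewrite -(eqn_modDr (xv x n.+1)) subnK ?(ltnW (xv_lt _ _)) //.
by rewrite -modnDmr xv_S subnK ?(ltnW (xv_lt _ _)) // modnn dvd_mod0.
Qed.

Definition neg s hd hpos (x : odo s) : odo s := @mk_odo s hd hpos _ (neg_proof hd x).

From mathcomp Require Import zify.


Lemma addC s hd (x y : odo s) : odo_add hd x y = odo_add hd y x.
Proof. by apply: odo_eq => n; rewrite !xv_add addnC. Qed.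

Lemma addA s hd (x y z : odo s) :
  odo_add hd x (odo_add hd y z) = odo_add hd (odo_add hd x y) z.
Proof. by apply: odo_eq => n; rewrite !xv_add modnDml modnDmr addnA. Qed.

Lemma add0 s hd (hpos : forall n, 0 < s n) (x : odo s) : odo_add hd (cst hd hpos 0) x = x.
Proof. by apply: odo_eq => n; rewrite xv_add xv_mk mod0n add0n xv_mod. Qed.

Lemma addNx s hd (hpos : forall n, 0 < s n) (x : odo s) : odo_add hd (neg hd hpos x) x = cst hd hpos 0.
Proof.
apply: odo_eq => n; rewrite xv_add !xv_mk modnDml subnK ?(ltnW (xv_lt _ _)) //.
by rewrite modnn mod0n.
Qed.

Lemma addxN s hd (hpos : forall n, 0 < s n) (x : odo s) : odo_add hd x (neg hd hpos x) = cst hd hpos 0.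
Proof. by rewrite addC addNx. Qed.

Lemma addNK s hd (hpos : forall n, 0 < s n) (x y : odo s) :
  odo_add hd (odo_add hd y (neg hd hpos x)) x = y.
Proof. by rewrite -addA addNx addC add0. Qed.

Lemma addKN s hd (hpos : forall n, 0 < s n) (x y : odo s) :
  odo_add hd (odo_add hd y x) (neg hd hpos x) = y.
Proof. by rewrite -addA addxN addC add0. Qed.

Lemma add_inj s hd (hpos : forall n, 0 < s n) (x y z : odo s) : odo_add hd x y = odo_add hd x z -> y = z.
Proof.
move=> h; rewrite -(@add0 _ hd hpos y) -(@add0 _ hd hpos z) -(@addNx _ hd hpos x) -!addA.
by rewrite h.
Qed.

Lemma ppos p (hp : is_scale p) n : 0 < p n.
Proof. by case: hp. Qed.

Lemma pK_dvd p (hp : is_scale p) K n : p K %| p (n + K).+1.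
Proof. by apply: scale_dvd_le => //; lia. Qed.

Lemma sh_mul p (hp : is_scale p) K n : p K * shift_scale p K n = p (n + K).+1.
Proof. by rewrite /shift_scale mulnC divnK // pK_dvd. Qed.

Lemma shpos p (hp : is_scale p) K n : 0 < shift_scale p K n.
Proof.
have := ppos hp (n + K).+1; rewrite -(sh_mul hp K n).
by rewrite muln_gt0 => /andP [].
Qed.

Notation XA hp := (odo_add (scale_dvd hp)).
Notation Xc hp j := (cst (scale_dvd hp) (ppos hp) j).
Notation XN hp x := (neg (scale_dvd hp) (ppos hp) x).
Notation YA hp K := (odo_add (shift_scale_dvd hp K)).

Lemma emb_proof p (hp : is_scale p) K (y : odo (shift_scale p K)) :
  forall m, (fun m => if K < m then p K * xv y (m - K.+1) else 0) m.+1
    = (fun m => if K < m then p K * xv y (m - K.+1) else 0) m %[mod p m].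
Proof.
move=> m /=; case: (ltngtP K m) => h.
- rewrite ltnS (ltnW h).
  have [n ->] : exists n, m = (n + K).+1 by exists (m - K.+1); lia.
  have -> : (n + K).+2 - K.+1 = n.+1 by lia.
  have -> : (n + K).+1 - K.+1 = n by lia.
  rewrite -(sh_mul hp K n) -!muln_modr xv_S xv_mod //.
- have h1 : (K < m.+1) = false by lia.
  by rewrite h1.
- by subst m; rewrite ltnSn subnn modnMr mod0n.
Qed.

Definition emb p (hp : is_scale p) K (y : odo (shift_scale p K)) : odo p :=
  mk_odo (scale_dvd hp) (ppos hp) (@emb_proof p hp K y).
Arguments emb {p} hp K y.

Lemma xv_emb_lo p (hp : is_scale p) K y m : m <= K -> xv (emb hp K y) m = 0.
Proof. by move=> h; rewrite xv_mk ltnNge h mod0n. Qed.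

Lemma xv_emb_hi p (hp : is_scale p) K y n :
  xv (emb hp K y) (n + K).+1 = p K * xv y n.
Proof.
rewrite xv_mk ltnS leq_addl.
have -> : (n + K).+1 - K.+1 = n by lia.
rewrite modn_small // -(sh_mul hp K n) ltn_pmul2l ?ppos ?xv_lt //.
Qed.

Lemma einv_proof p (hp : is_scale p) K (x : odo p) :
  forall n, (fun n => xv x (n + K).+1 %/ p K) n.+1
    = (fun n => xv x (n + K).+1 %/ p K) n %[mod shift_scale p K n].
Proof.
move=> n /=.
have E : xv x (n + K).+1 %/ p K = (xv x (n.+1 + K).+1 %/ p K) %% shift_scale p K n.
  by rewrite -(xv_S x (n + K).+1) -divn_modl ?pK_dvd // addSn.
by rewrite E modn_mod.
Qed.

Definition einv p (hp : is_scale p) K (x : odo p) : odo (shift_scale p K) :=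
  mk_odo (shift_scale_dvd hp K) (shpos hp K) (@einv_proof p hp K x).
Arguments einv {p} hp K x.

Lemma xv_einv p (hp : is_scale p) K x n :
  xv (einv hp K x) n = xv x (n + K).+1 %/ p K.
Proof.
rewrite xv_mk modn_small // ltn_divLR ?ppos // mulnC sh_mul //; exact: xv_lt.
Qed.

Lemma einv_emb p (hp : is_scale p) K y : einv hp K (emb hp K y) = y.
Proof.
by apply: odo_eq => n; rewrite xv_einv xv_emb_hi mulKn ?ppos.
Qed.

Lemma emb_einv p (hp : is_scale p) K x : xv x K = 0 -> emb hp K (einv hp K x) = x.
Proof.
move=> h0; apply: odo_eq => m; case: (leqP m K) => hm.
  by rewrite xv_emb_lo // -(xv_le (scale_dvd hp) x hm) h0 mod0n.
have [n ->] : exists n, m = (n + K).+1 by exists (m - K.+1); lia.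
rewrite xv_emb_hi xv_einv mulnC divnK //.
rewrite /dvdn (xv_le (scale_dvd hp)) ?h0 //; lia.
Qed.

Lemma xv_cst s hd hpos j m : xv (@cst s hd hpos j) m = j %% s m.
Proof. by []. Qed.

Lemma emb_add p (hp : is_scale p) K (y y' : odo (shift_scale p K)) :
  emb hp K (YA hp K y y') = XA hp (emb hp K y) (emb hp K y').
Proof.
apply: odo_eq => m; rewrite xv_add; case: (leqP m K) => hm.
  by rewrite !xv_emb_lo // mod0n.
have [n ->] : exists n, m = (n + K).+1 by exists (m - K.+1); lia.
by rewrite !xv_emb_hi xv_add muln_modr (sh_mul hp) mulnDr.
Qed.

Lemma decomp p (hp : is_scale p) K (x : odo p) :
  x = XA hp (Xc hp (xv x K)) (emb hp K (einv hp K x)).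
Proof.
apply: odo_eq => m; rewrite xv_add xv_cst; case: (leqP m K) => hm.
  by rewrite xv_emb_lo // addn0 modn_mod (xv_le (scale_dvd hp)).
have [n ->] : exists n, m = (n + K).+1 by exists (m - K.+1); lia.
rewrite xv_emb_hi xv_einv modnDml.
rewrite -(xv_le (scale_dvd hp) x (_ : K <= (n + K).+1)); last by lia.
by rewrite mulnC [_ %% p K + _]addnC -divn_eq xv_mod.
Qed.

Lemma einv_split p (hp : is_scale p) K (j : nat) (y : odo (shift_scale p K)) :
  j < p K -> einv hp K (XA hp (Xc hp j) (emb hp K y)) = y.
Proof.
move=> hj; apply: odo_eq => n; rewrite xv_einv xv_add xv_cst xv_emb_hi.
have hP : p K <= p (n + K).+1 by apply: dvdn_leq; [exact: ppos | exact: pK_dvd].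
have hy : p K * (xv y n).+1 <= p (n + K).+1.
  by rewrite -(sh_mul hp K n) leq_pmul2l ?ppos ?xv_lt.
rewrite (modn_small (_ : j < _)); last by lia.
rewrite modn_small; last by rewrite mulnS in hy; lia.
by rewrite addnC mulnC divnMDl ?ppos // divn_small // addn0.
Qed.

Lemma einv_add_H p (hp : is_scale p) K (x z : odo p) : xv z K = 0 ->
  einv hp K (XA hp x z) = YA hp K (einv hp K x) (einv hp K z).
Proof.
move=> hz; apply: odo_eq => n; rewrite xv_add !xv_einv xv_add.
have dz : p K %| xv z (n + K).+1.
  by rewrite /dvdn (xv_le (scale_dvd hp)) ?hz //; lia.
by rewrite divn_modl ?pK_dvd // divnDr.
Qed.

Definition ix p (hp : is_scale p) K (x : odo p) : 'I_(p K) := Ordinal (xv_lt x K).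

Definition act p (hp : is_scale p) K
  (g : ('I_(p K) -> odo (shift_scale p K)) * 'S_(p K)) (x : odo p) : odo p :=
  XA hp (Xc hp (g.2 (ix hp K x)))
     (emb hp K (YA hp K (g.1 (g.2 (ix hp K x))) (einv hp K x))).
Arguments act {p} hp K g x.

Lemma xv_K_split p (hp : is_scale p) K (j : nat) y : j < p K ->
  xv (XA hp (Xc hp j) (emb hp K y)) K = j.
Proof. by move=> hj; rewrite xv_add xv_emb_lo // addn0 xv_cst !modn_small. Qed.

Lemma ix_act p (hp : is_scale p) K g x : ix hp K (@act p hp K g x) = g.2 (ix hp K x).
Proof. by apply: val_inj; exact: (@xv_K_split p hp K _ _ (ltn_ord _)). Qed.

Lemma einv_act p (hp : is_scale p) K g x :
  einv hp K (@act p hp K g x) = YA hp K (g.1 (g.2 (ix hp K x))) (einv hp K x).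
Proof. by rewrite /act einv_split. Qed.

Notation Y0 hp K := (cst (shift_scale_dvd hp K) (shpos hp K) 0).
Notation YN hp K y := (neg (shift_scale_dvd hp K) (shpos hp K) y).

Lemma act_mul p (hp : is_scale p) K (g g' : ('I_(p K) -> odo (shift_scale p K)) * 'S_(p K)) x :
  act hp K (@sdp_mul (odo_grp (shift_scale_dvd hp K)) (p K) g g') x
  = act hp K g (act hp K g' x).
Proof.
rewrite {2}/act ix_act einv_act /act /sdp_mul.
rewrite permM; cbn [fst]; rewrite permK.
by rewrite (@addA _ (shift_scale_dvd hp K)).
Qed.

Lemma act_id p (hp : is_scale p) K (g : ('I_(p K) -> odo (shift_scale p K)) * 'S_(p K)) :
  g.2 = 1%g -> (forall j, g.1 j = Y0 hp K) -> forall x, act hp K g x = x.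
Proof.
move=> h2 h1 x; rewrite /act h1 add0 [RHS](decomp hp K x) h2 perm1 //.
Qed.

Definition ginv p (hp : is_scale p) K (g : ('I_(p K) -> odo (shift_scale p K)) * 'S_(p K))
  : ('I_(p K) -> odo (shift_scale p K)) * 'S_(p K) :=
  (fun i => YN hp K (g.1 (g.2 i)), (g.2)^-1%g).
Arguments ginv {p} hp K g.

Lemma act_ginv_l p (hp : is_scale p) K g x :
  act hp K (ginv hp K g) (act hp K g x) = x.
Proof.
rewrite -act_mul; apply: act_id => [|j] /=; first by rewrite mulgV.
by rewrite invgK addNx.
Qed.

Lemma act_ginv_r p (hp : is_scale p) K g x :
  act hp K g (act hp K (ginv hp K g) x) = x.
Proof.
rewrite -act_mul; apply: act_id => [|j] /=; first by rewrite mulVg.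
by rewrite permKV addxN.
Qed.

Lemma ix_XA p (hp : is_scale p) K x z : xv z K = 0 -> ix hp K (XA hp x z) = ix hp K x.
Proof.
move=> hz; apply: val_inj; change (xv (XA hp x z) K = xv x K).
by rewrite xv_add hz addn0 xv_mod.
Qed.

Lemma act_H p (hp : is_scale p) K g x z : xv z K = 0 ->
  act hp K g (XA hp x z) = XA hp (act hp K g x) z.
Proof.
move=> hz; rewrite /act ix_XA // einv_add_H // (@addA _ (shift_scale_dvd hp K)).
by rewrite emb_add -addA emb_einv.
Qed.

Lemma ix_cst p (hp : is_scale p) K (i : 'I_(p K)) : ix hp K (Xc hp i) = i.
Proof. by apply: val_inj; change (xv (Xc hp i) K = i); rewrite xv_cst modn_small. Qed.

Lemma act_inj p (hp : is_scale p) K g g' :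
  (forall x, act hp K g x = act hp K g' x) -> g = g'.
Proof.
case: g g' => [v s] [v' s'] h.
have hs : forall i, s i = s' i.
  move=> i; have := congr1 (fun x => xv x K) (h (Xc hp i)).
  by rewrite /act; cbn [fst snd]; rewrite !xv_K_split // ix_cst => /val_inj.
have ss : s = s' by apply/permP.
subst s'; congr pair; apply: functional_extensionality => j.
have := congr1 (einv hp K) (h (Xc hp ((s^-1)%g j))).
rewrite /act; cbn [fst snd]; rewrite !einv_split // ix_cst permKV.
rewrite (addC _ (v j)) (addC _ (v' j)).
exact: (add_inj (shpos hp K)).
Qed.

Lemma act_cont p (hp : is_scale p) K g : odo_cont (act hp K g).
Proof.
move=> x n; exists (maxn n K) => y hy.
have hK : ix hp K y = ix hp K x.
  by apply: val_inj; change (xv y K = xv x K); apply: hy; rewrite leq_maxr.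
change (xv (act hp K g y) n = xv (act hp K g x) n).
rewrite /act hK !xv_add; congr (_ %% _); congr (_ + _).
case: (leqP n K) => hn; first by rewrite !xv_emb_lo.
have [k Ek] : exists k, n = (k + K).+1 by exists (n - K.+1); lia.
have hy2 : forall j, j <= maxn n K -> xv y j = xv x j := hy.
by rewrite Ek !xv_emb_hi !xv_add !xv_einv -Ek hy2 // leq_maxl.
Qed.

Lemma iter_succ s hd hpos (x : odo s) n :
  iter n (odo_succ hd) x = odo_add hd x (@cst s hd hpos n).
Proof.
elim: n => [|n IH] /=; apply: odo_eq => m.
  by rewrite xv_add xv_cst mod0n addn0 xv_mod.
rewrite IH /odo_succ /xv /= modnDmr modnDml modnDmr.
by rewrite addn1 addnS.
Qed.

Definition fsig p (hp : is_scale p) K (h : odo p -> odo p) : 'I_(p K) -> 'I_(p K) :=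
  fun i => ix hp K (h (Xc hp i)).
Arguments fsig {p} hp K h.

Definition psig p (hp : is_scale p) K (h : odo p -> odo p) : 'S_(p K) :=
  match injectiveP (fsig hp K h) with
  | ReflectT inj => perm inj
  | ReflectF _ => 1%g
  end.
Arguments psig {p} hp K h.

Lemma psigE p (hp : is_scale p) K h : injective (fsig hp K h) ->
  forall i, psig hp K h i = fsig hp K h i.
Proof.
move=> inj i; rewrite /psig; case: injectiveP => [inj'|//]; by rewrite permE.
Qed.

Definition psi p (hp : is_scale p) K (h : odo p -> odo p)
  : ('I_(p K) -> odo (shift_scale p K)) * 'S_(p K) :=
  (fun j => einv hp K (h (Xc hp ((psig hp K h)^-1%g j))), psig hp K h).
Arguments psi {p} hp K h.

Lemma decomp_ix p (hp : is_scale p) K (x : odo p) :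
  x = XA hp (Xc hp (ix hp K x)) (emb hp K (einv hp K x)).
Proof. exact: decomp. Qed.

Lemma emb_K p (hp : is_scale p) K y : xv (emb hp K y) K = 0.
Proof. exact: xv_emb_lo. Qed.

Lemma psi_act p (hp : is_scale p) K (h : odo p -> odo p) :
  injective h -> (forall x z, xv z K = 0 -> h (XA hp x z) = XA hp (h x) z) ->
  forall x, act hp K (psi hp K h) x = h x.
Proof.
move=> hinj hH.
have finj : injective (fsig hp K h).
  move=> i j eij.
  pose Ei := einv hp K (h (Xc hp i)); pose Ej := einv hp K (h (Xc hp j)).
  have Di := decomp_ix hp K (h (Xc hp i)).
  have Dj := decomp_ix hp K (h (Xc hp j)).
  have : h (Xc hp j) = h (XA hp (Xc hp i) (emb hp K (YA hp K (YN hp K Ei) Ej))).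
    rewrite hH ?emb_K // Di -/Ei -addA -emb_add (@addA _ (shift_scale_dvd hp K)).
    by rewrite addxN add0 {1}Dj -/Ej; congr (XA hp (Xc hp _) _); exact: (congr1 val (esym eij)).
  move/hinj/(congr1 (fun x => xv x K)); rewrite xv_K_split // xv_cst modn_small //.
  by move/val_inj.
move=> x; rewrite {2}(decomp_ix hp K x) hH ?emb_K //.
rewrite (decomp_ix hp K (h (Xc hp (ix hp K x)))) -addA -emb_add.
rewrite /act /psi; cbn [fst snd]; rewrite permK psigE //.
Qed.

Lemma stab (f : nat -> nat) B : (forall m, f m <= B) -> (forall m, f m <= f m.+1) ->
  exists K, forall M, K <= M -> f M = f K.
Proof.
move=> hB hmon.
have mono : forall m M, m <= M -> f m <= f M.
  move=> m; elim=> [|M IH]; first by rewrite leqn0 => /eqP ->.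
  rewrite leq_eqVlt => /orP [/eqP -> //|]; rewrite ltnS => /IH h.
  exact: leq_trans h (hmon M).
suff : forall d K0, B - f K0 <= d -> exists K, forall M, K <= M -> f M = f K.
  by move/(_ B 0); apply; apply: leq_subr.
elim=> [|d IH] K0 hd.
  exists K0 => M hM; have := mono _ _ hM; have := hB M; lia.
case: (classic (exists M, K0 <= M /\ f M <> f K0)) => [[M [hM hne]]|hno].
  apply: (IH M); have := mono _ _ hM; have := hB M; lia.
exists K0 => M hM; apply: NNPP => hne; apply: hno; exists M; split => //.
Qed.

Lemma aut_comm_H p (hp : is_scale p) (h : aut_inf (scale_dvd hp)) :
  exists K, forall x z, xv z K = 0 ->
    hfun (proj1_sig h) (XA hp x z) = XA hp (hfun (proj1_sig h) x) z.
Proof.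
case: h => [[[f f'] [c1 c2 cf cf']] [n [n0 hn]]] /=.
rewrite /hfun /= in hn *.
have [K hK] : exists K, forall M, K <= M -> gcdn n (p M) = gcdn n (p K).
  apply: (@stab (fun m => gcdn n (p m)) n).
    by move=> m; apply: dvdn_leq => //; apply: dvdn_gcdl.
  move=> m; apply: dvdn_leq; first by rewrite gcdn_gt0 n0.
  by rewrite dvdn_gcd dvdn_gcdl (dvdn_trans (dvdn_gcdr _ _) (scale_dvd hp m)).
exists K => x z hz; apply: odo_eq => N.
have [M hM] := cf (XA hp x z) N.
pose M' := maxn (maxn M N) K; pose P := p M'.
have hKM : K <= M' by rewrite leq_maxr.
have hNM : N <= M' by rewrite leq_max leq_maxr.
have hMM : M <= M' by rewrite leq_max leq_max leqnn.
have gdz : gcdn n P %| xv z M'.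
  rewrite /P hK //; apply: dvdn_trans (dvdn_gcdr _ _) _.
  by rewrite /dvdn (xv_le (scale_dvd hp)) ?hz.
case/dvdnP: gdz => w hw.
case: (egcdnP P n0) => km kn E _.
pose t := km * w.
have ht : (n * t) %% P = xv z M'.
  have -> : n * t = (kn * w) * P + xv z M'.
    by rewrite /t mulnA (mulnC n) E mulnDl hw mulnAC mulnC (mulnC w).
  by rewrite modnMDl xv_mod.
have hj : forall j, j <= M' -> (n * t) %% p j = xv z j.
  move=> j hj; rewrite -(xv_le (scale_dvd hp) z hj) -ht modn_dvdm //.
  exact: scale_dvd_le.
pose y := iter (n * t) (odo_succ (scale_dvd hp)) x.
have hy : forall j, j <= M -> proj1_sig y j = proj1_sig (XA hp x z) j.
  move=> j hjM; change (xv y j = xv (XA hp x z) j).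
  rewrite /y (@iter_succ _ _ (ppos hp)) !xv_add xv_cst hj //.
  exact: leq_trans hjM hMM.
have := hM y hy; change (xv (f y) N = xv (f (XA hp x z)) N -> xv (f (XA hp x z)) N = xv (XA hp (f x) z) N).
move=> <-; rewrite /y mulnC (iterM t n) (iter_comm hn) -iterM.
by rewrite (@iter_succ _ _ (ppos hp)) !xv_add xv_cst mulnC hj.
Qed.

Definition F p (hp : is_scale p) (k : nat) : Gseq hp k -> odo p -> odo p :=
  match k return Gseq hp k -> odo p -> odo p with
  | 0 => fun v x => XA hp x v
  | K.+1 => fun g => act hp K g
  end.
Arguments F {p hp} k _ _.

Lemma F_H p (hp : is_scale p) k (g : Gseq hp k) (x z : odo p) : xv z k = 0 ->
  F k g (XA hp x z) = XA hp (F k g x) z.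
Proof.
case: k g => [|K] g hz /=.
  by rewrite -addA (addC _ z) addA.
apply: act_H; rewrite -(xv_le (scale_dvd hp) z (leqnSn K)) hz mod0n //.
Qed.

Lemma F_inj p (hp : is_scale p) k (g : Gseq hp k) : injective (F k g).
Proof.
case: k g => [|K] g /=.
  by move=> x y; rewrite (addC _ x) (addC _ y); exact: (@add_inj _ _ (ppos hp)).
move=> x y e; have := congr1 (act hp K (ginv hp K g)) e; by rewrite !act_ginv_l.
Qed.

Lemma F_mul p (hp : is_scale p) k (a b : Gseq hp k) x :
  F k (gmul a b) x = F k a (F k b x).
Proof.
case: k a b => [|K] a b /=; last exact: act_mul.
by rewrite (addC _ a b) addA.
Qed.

Lemma F_injp p (hp : is_scale p) k (a b : Gseq hp k) :
  (forall x, F k a x = F k b x) -> a = b.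
Proof.
case: k a b => [|K] a b /= h; last exact: act_inj.
by have := h (Xc hp 0); rewrite !add0.
Qed.

Definition jj p (hp : is_scale p) k (g : Gseq hp k) : Gseq hp k.+1 := psi hp k (F k g).
Arguments jj {p hp k} g.

Lemma act_jj p (hp : is_scale p) k (g : Gseq hp k) x : act hp k (jj g) x = F k g x.
Proof. apply: psi_act; [exact: F_inj | exact: F_H]. Qed.

Lemma Phi_homeo p (hp : is_scale p) K g :
  is_homeo (act hp K g, act hp K (ginv hp K g)).
Proof.
split => /=; [exact: act_ginv_l | exact: act_ginv_r | exact: act_cont | exact: act_cont].
Qed.
Arguments Phi_homeo {p} hp K g.

Lemma Phi_aut p (hp : is_scale p) K g :
  in_Aut_inf (scale_dvd hp) (exist _ _ (Phi_homeo hp K g)).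
Proof.
exists (p K); split; first exact: ppos.
move=> x; rewrite /hfun /= !(@iter_succ _ _ (ppos hp)) act_H //.
by rewrite xv_cst modnn.
Qed.
Arguments Phi_aut {p} hp K g.

Definition Phi p (hp : is_scale p) K g : aut_inf (scale_dvd hp) :=
  exist _ _ (Phi_aut hp K g).
Arguments Phi {p} hp K g.

Definition phi p (hp : is_scale p) (k : nat) : Gseq hp k -> Aut_inf_grp (scale_dvd hp) :=
  match k return Gseq hp k -> Aut_inf_grp (scale_dvd hp) with
  | 0 => fun v => Phi hp 0 (jj v)
  | K.+1 => fun g => Phi hp K g
  end.
Arguments phi {p hp} k _.

Lemma hfun_phi p (hp : is_scale p) k (g : Gseq hp k) x : hfun (proj1_sig (phi k g)) x = F k g x.
Proof. case: k g => [|K] g //=; exact: act_jj. Qed.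

Lemma aut_eq s hd (a b : @aut_inf s hd) :
  (forall x, hfun (proj1_sig a) x = hfun (proj1_sig b) x) -> a = b.
Proof.
case: a b => [[[f f'] hf] ha] [[[g g'] hg] hb]; rewrite /hfun /= => E.
have efg : f = g by apply: functional_extensionality.
subst g.
have ef' : f' = g'.
  apply: functional_extensionality => x.
  case: (hf) => c1 _ _ _; case: (hg) => _ c2' _ _.
  move: (c1 (g' x)) (c2' x) => /= c1x c2x.
  by rewrite -{1}c2x c1x.
subst g'.
have Ehf : hf = hg by apply: proof_irrelevance.
subst hg.
by have -> : ha = hb by apply: proof_irrelevance.
Qed.

Theorem theorem3p5 (p : nat -> nat) (hp : is_scale p) :
  exists j : forall k, Gseq hp k -> Gseq hp k.+1,
    (forall k, ghom (j k) /\ injective (j k)) /\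
    exists phi : forall k, Gseq hp k -> Aut_inf_grp (scale_dvd hp),
      is_direct_limit j phi.
Proof.
exists (fun k => @jj p hp k); split.
  move=> k; split.
    move=> a b; apply: act_inj => x.
    rewrite act_jj F_mul act_mul !act_jj //.
  move=> a b e; apply: F_injp => x.
  by rewrite -!act_jj e.
exists (@phi p hp); split.
- move=> k a b; apply: aut_eq => x.
  rewrite hfun_phi F_mul.
  change (F k a (F k b x) = hfun (proj1_sig (phi k a)) (hfun (proj1_sig (phi k b)) x)).
  by rewrite !hfun_phi.
- move=> k x; apply: aut_eq => y; rewrite !hfun_phi /=; exact: act_jj.
- move=> z; have [K hK] := aut_comm_H z.
  exists K.+1, (psi hp K (hfun (proj1_sig z))).
  apply: aut_eq => x; rewrite hfun_phi /=; apply: psi_act => //.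
  case: (proj2_sig (proj1_sig z)) => c1 _ _ _; exact: can_inj c1.
- move=> k x y e; exists 0 => /=.
  apply: F_injp => u; rewrite -!hfun_phi e //.
Qed.
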